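(* Let $H\subset S_n$ be a permutation group, let $A\trianglelefteq\mathbb{Z}_2^{*n}$ be an $H$-invariant normal subgroup, and let $\Gamma=\mathbb{Z}_2^{*n}/A$. Let $u$ be the fundamental representation of the quantum group $\mathbb{G}=\hat\Gamma\rtimes H$. Then for all $k,l\in\mathbb{N}_0$, $$\mathrm{Mor}(u^{\otimes k},u^{\otimes l})=\mathrm{span}\{\hat T^{\mathbf{a}\mathbf{b}}_H\mid[\mathbf{a},\mathbf{b}]\in W_H(k,l)\text{ such that }g_{\mathbf{a}\mathbf{b}^*}\in A\},$$ and the family $\{\hat T^{\mathbf{a}\mathbf{b}}_H\}_{[\mathbf{a},\mathbf{b}]\in W_H(k,l)}$ (one map per class) is linearly independent.
   Context: $\mathbb{Z}_2^{*n}$ is the group generated by $1,\dots,n$ subject to $i^2=e$; $S_n$ acts on it by permuting generators, and $A$ is $H$-invariant if $\sigma(A)=A$ for all $\sigma\in H$. For a tuple $\mathbf{a}=(a_1,\dots,a_k)$ over $\{1,\dots,n\}$, $\mathbf{a}^*$ is the reversed tuple, $\mathbf{a}\mathbf{b}^*$ denotes concatenation, and $g_{\mathbf{c}}=c_1c_2\cdots$ is the corresponding group element (so $g_{\mathbf{a}\mathbf{b}^*}=g_{\mathbf{a}}g_{\mathbf{b}}^{-1}$). Quantum groups: an orthogonal compact matrix quantum group is $(O(\mathbb{G}),u)$ with $O(\mathbb{G})$ a $*$-algebra generated by entries of $u\in M_n(O(\mathbb{G}))$, $u_{ij}=u_{ij}^*$, $uu^t=u^tu=1$, and $u_{ij}\mapsto\sum_k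 u_{ik}\otimes u_{kj}$ extending to a $*$-homomorphism; $\mathrm{Mor}(u^{\otimes k},u^{\otimes l})=\{T\colon(\mathbb{C}^n)^{\otimes k}\to(\mathbb{C}^n)^{\otimes l}\mid Tu^{\otimes k}=u^{\otimes l}T\}$. $H$ is the quantum group $(O(H),v)$ with $v_{ij}(\sigma)=\delta_{i\sigma(j)}$. With $\gamma_i\in\mathbb{C}\Gamma$ the image of the generator $i$, $\hat\Gamma\rtimes H$ is the quantum group $(\mathbb{C}\Gamma\otimes O(H),u)$ with $u_{ij}=\gamma_i\otimes v_{ij}$. $W_H(k,l)$ is the set of orbits $[\mathbf{a},\mathbf{b}]$ of pairs $(\mathbf{a},\mathbf{b})\in\{1,\dots,n\}^k\times\{1,\dots,n\}^l$ under the diagonal action of $H$. $\hat T^{\mathbf{a}\mathbf{b}}_H\colon(\mathbb{C}^n)^{\otimes k}\to(\mathbb{C}^n)^{\otimes l}$ is the linear map with entries $[\hat T^{\mathbf{a}\mathbf{b}}_H]_{\mathbf{j}\mathbf{i}}=\#\{\phi\in H\mid\phi(\mathbf{a})=\mathbf{i},\phi(\mathbf{b})=\mathbf{j}\}$ (coefficient of $e_{j_1}\otimes\cdots\otimes e_{j_l}$ in the image of $e_{i_1}\otimes\cdots\otimes e_{i_k}$); it depends only on $[\mathbf{a},\mathbf{b}]$, and the condition $g_{\mathbf{a}\mathbf{b}^*}\in A$ depends only on the class since $A$ is $H$-invariant. *)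

(* Defs.v *)
From HB Require Import structures.
From mathcomp Require Import all_boot all_order all_algebra all_fingroup.
From mathcomp Require Import Rstruct complex.
Set Implicit Arguments. Unset Strict Implicit. Unset Printing Implicit Defensive.
Import Order.TTheory GRing.Theory Num.Theory.
Local Open Scope ring_scope.

Definition Cplx : numClosedFieldType := complex Rdefinitions.R.

Section Defs.
Variable n : nat.

(* A word over the generators {1..n} (here 'I_n) represents an element of
   Z_2^{*n}; the element g_c = c_1 c_2 ... of a tuple c is the word c. *)
Definition word := seq 'I_n.

(* free reduction using i^2 = e *)
Definition push (x : 'I_n) (s : word) : word :=
  if s is y :: s' then (if x == y then s' else x :: s) else [:: x].
Definition red (w : word) : word := foldr push [::] w.

(* A subset of Z_2^{*n} is given by a predicate on reduced words;
   membership of the element represented by an arbitrary word w: *)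
Definition memZ (A : pred word) (w : word) : bool := A (red w).

(* A is a normal subgroup of Z_2^{*n}; the inverse of the element of
   the word x is the element of the word rev x. *)
Definition normal_subgroup (A : pred word) : Prop :=
  [/\ memZ A [::],
      (forall x y, memZ A x -> memZ A y -> memZ A (x ++ y)),
      (forall x, memZ A x -> memZ A (rev x)) &
      (forall x y, memZ A y -> memZ A (x ++ y ++ rev x))].

Definition act (s : {perm 'I_n}) (w : word) : word := map s w.

Definition H_invariant (H : {set {perm 'I_n}}) (A : pred word) : Prop :=
  forall s, s \in H -> forall w, memZ A (act s w) = memZ A w.

(* An element of C Gamma is represented by a finite formal linear combination
   sum_t c_t [w_t] of (images of) elements of Z_2^{*n}. *)
Definition CG := seq (Cplx * word).

Definition cg_zero : CG := [::].
Definition cg_one : CG := [:: (1, [::])].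
Definition cg_gen (i : 'I_n) : CG := [:: (1, [:: i])].
Definition cg_add (x y : CG) : CG := x ++ y.
Definition cg_sum (xs : seq CG) : CG := flatten xs.
Definition cg_scale (c : Cplx) (x : CG) : CG := [seq (c * t.1, t.2) | t <- x].
Definition cg_mul (x y : CG) : CG :=
  [seq (t.1 * t'.1, t.2 ++ t'.2) | t <- x, t' <- y].

(* the coefficient of the coset gA (g represented by the word w) *)
Definition cg_coef (A : pred word) (x : CG) (w : word) : Cplx :=
  \sum_(t <- x | memZ A (t.2 ++ rev w)) t.1.

Definition cg_eq (A : pred word) (x y : CG) : Prop :=
  forall w, cg_coef A x w = cg_coef A y w.

(* ---------- O(G) = C Gamma (x) O(H) = functions H -> C Gamma ---------- *)
Definition OG := {perm 'I_n} -> CG.   (* only the values on H matter *)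
Definition og_eq (H : {set {perm 'I_n}}) (A : pred word) (f g : OG) : Prop :=
  forall s, s \in H -> cg_eq A (f s) (g s).

(* v_ij(sigma) = delta_{i, sigma(j)} and u_ij = gamma_i (x) v_ij *)
Definition u_ (i j : 'I_n) : OG :=
  fun s => if i == s j then cg_gen i else cg_zero.

Definition utens (k : nat) (j i : k.-tuple 'I_n) : OG :=
  fun s => foldr (fun p acc => cg_mul (u_ p.1 p.2 s) acc) cg_one (zip j i).

(* linear maps (C^n)^{(x)k} -> (C^n)^{(x)l} as matrices:
   T (j, i) = coefficient of e_j in T e_i *)
Definition Lin (k l : nat) := {ffun (l.-tuple 'I_n * k.-tuple 'I_n) -> Cplx^o}.

Definition Tu (k l : nat) (T : Lin k l) (j : l.-tuple 'I_n) (i : k.-tuple 'I_n) : OG :=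
  fun s => cg_sum [seq cg_scale (T (j, p)) (utens p i s) | p <- enum {: k.-tuple 'I_n}].
Definition uT (k l : nat) (T : Lin k l) (j : l.-tuple 'I_n) (i : k.-tuple 'I_n) : OG :=
  fun s => cg_sum [seq cg_scale (T (q, i)) (utens j q s) | q <- enum {: l.-tuple 'I_n}].

Definition Mor (H : {set {perm 'I_n}}) (A : pred word) (k l : nat) (T : Lin k l) : Prop :=
  forall j i, og_eq H A (Tu T j i) (uT T j i).

Definition tact (m : nat) (s : {perm 'I_n}) (a : m.-tuple 'I_n) : m.-tuple 'I_n :=
  [tuple of map s a].

Definition orbitH (H : {set {perm 'I_n}}) (k l : nat)
    (p : k.-tuple 'I_n * l.-tuple 'I_n) : {set k.-tuple 'I_n * l.-tuple 'I_n} :=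
  [set (tact s p.1, tact s p.2) | s in H].

Definition W (H : {set {perm 'I_n}}) (k l : nat) : {set {set k.-tuple 'I_n * l.-tuple 'I_n}} :=
  [set orbitH H p | p in [set: k.-tuple 'I_n * l.-tuple 'I_n]].

Definition That (H : {set {perm 'I_n}}) (k l : nat)
    (p : k.-tuple 'I_n * l.-tuple 'I_n) : Lin k l :=
  [ffun ji => (#|[set s in H | (tact s p.1 == ji.2) && (tact s p.2 == ji.1)]|)%:R].

Definition ThatW (H : {set {perm 'I_n}}) (k l : nat)
    (X : {set k.-tuple 'I_n * l.-tuple 'I_n}) : Lin k l :=
  if [pick p in X] is Some p then That H p else 0.

Definition classInA (A : pred word) (k l : nat)
    (X : {set k.-tuple 'I_n * l.-tuple 'I_n}) : bool :=
  if [pick p in X] is Some p then memZ A (val p.1 ++ rev (val p.2)) else false.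

End Defs.

(* Main.v *)
Require Import Defs.
From mathcomp Require Import all_boot all_order all_algebra all_fingroup.
Set Implicit Arguments. Unset Strict Implicit. Unset Printing Implicit Defensive.
Import Order.TTheory GRing.Theory Num.Theory.
Local Open Scope ring_scope.

Section Words.
Variable n : nat.
Implicit Types (x y u v w : word n).

Fixpoint reduced (w : word n) : bool :=
  if w is a :: w' then (if w' is b :: _ then a != b else true) && reduced w' else true.

Lemma push_reduced (a : 'I_n) w : reduced w -> reduced (push a w).
Proof.
case: w => [|b w] //= /andP[h1 h2].
case: eqP => [_|/eqP ab] //=; by rewrite ab h1 h2.
Qed.

Lemma red_reduced w : reduced (red w).
Proof. by elim: w => [|a w IH] //=; apply: push_reduced. Qed.

Lemma pushK (a : 'I_n) w : reduced w -> push a (push a w) = w.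
Proof.
case: w => [|b w] /=; first by rewrite eqxx.
case: eqP => [<-|/eqP ab] /=.
  case: w => [|c w] /=; first by [].
  by case/andP=> /negbTE -> _.
by rewrite eqxx.
Qed.

Lemma red_cat x y : red (x ++ y) = foldr (@push n) (red y) x.
Proof. by rewrite /red foldr_cat. Qed.

Lemma red_revK x v : red (rev x ++ x ++ v) = red v.
Proof.
elim: x v => [|a x IH] v //=.
rewrite rev_cons -cats1 -catA /= red_cat /= pushK ?red_reduced //.
by rewrite -red_cat IH.
Qed.

Lemma red_cancel u x v : red (u ++ rev x ++ x ++ v) = red (u ++ v).
Proof. by rewrite [LHS]red_cat red_revK -red_cat. Qed.

Variable A : pred (word n).
Hypothesis nA : normal_subgroup A.

Lemma memZ_eq x y : red x = red y -> memZ A x = memZ A y.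
Proof. by rewrite /memZ => ->. Qed.

Lemma memZ_self x : memZ A (x ++ rev x).
Proof.
case: nA => h0 _ _ _.
have := red_cancel [::] (rev x) [::]; rewrite revK cats0 /= => e.
by rewrite (@memZ_eq _ [::] e).
Qed.

Lemma memZ_shift x y w : memZ A (x ++ rev y) ->
  memZ A (x ++ rev w) = memZ A (y ++ rev w).
Proof.
case: nA => h0 hM hV _ hxy; apply/idP/idP => h.
  have := hM _ _ (hV _ hxy) h; rewrite rev_cat revK -!catA.
  by rewrite (memZ_eq (red_cancel _ _ _)).
have := hM _ _ hxy h; rewrite -!catA.
by rewrite (memZ_eq (red_cancel _ _ _)).
Qed.
End Words.
Section Coef.
Variable n : nat.
Variable A : pred (word n).

Lemma tactE m (s : {perm 'I_n}) (a : m.-tuple 'I_n) : val (tact s a) = map s a.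
Proof. by []. Qed.

Lemma tactK m (s : {perm 'I_n}) (a : m.-tuple 'I_n) : tact s^-1 (tact s a) = a.
Proof. by apply: val_inj; rewrite /= -map_comp (eq_map (permK s)) map_id. Qed.

Lemma tactKV m (s : {perm 'I_n}) (a : m.-tuple 'I_n) : tact s (tact s^-1 a) = a.
Proof. by apply: val_inj; rewrite /= -map_comp (eq_map (permKV s)) map_id. Qed.

Lemma tact1 m (a : m.-tuple 'I_n) : tact 1%g a = a.
Proof. by apply: val_inj; rewrite /= (eq_map (@perm1 _)) map_id. Qed.

Lemma tactM m (s t : {perm 'I_n}) (a : m.-tuple 'I_n) : tact (s * t)%g a = tact t (tact s a).
Proof. by apply: val_inj; rewrite /= -map_comp; apply: eq_map => x; rewrite permM. Qed.

Lemma cg_coef_cat x y w : cg_coef A (x ++ y) w = cg_coef A x w + cg_coef A y w.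
Proof. by rewrite /cg_coef big_cat. Qed.

Lemma cg_coef_flatten xs w : cg_coef A (flatten xs) w = \sum_(x <- xs) cg_coef A x w.
Proof.
elim: xs => [|x xs IH] /=; first by rewrite big_nil /cg_coef big_nil.
by rewrite cg_coef_cat IH big_cons.
Qed.

Lemma cg_coef_scale c x w : cg_coef A (cg_scale c x) w = c * cg_coef A x w.
Proof. by rewrite /cg_coef big_map mulr_sumr. Qed.

Lemma cg_coef_single x w : cg_coef A [:: (1, x)] w = (memZ A (x ++ rev w))%:R.
Proof. by rewrite /cg_coef big_cons big_nil /=; case: (memZ A _); rewrite ?addr0. Qed.

Lemma cg_coef_nil w : cg_coef A [::] w = 0.
Proof. by rewrite /cg_coef big_nil. Qed.

Lemma allpairs_nilr (T1 T2 T3 : Type) (f : T1 -> T2 -> T3) (x : seq T1) :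
  [seq f a b | a <- x, b <- [::]] = [::].
Proof. by elim: x. Qed.

Lemma utens_seq (s : {perm 'I_n}) (p i : seq 'I_n) : size p = size i ->
  foldr (fun q acc => cg_mul (u_ q.1 q.2 s) acc) (cg_one n) (zip p i) =
  if p == map s i then [:: (1, p)] else [::].
Proof.
elim: p i => [|a p IH] [|b i] //= [/IH ->].
rewrite /u_ /= eqseq_cons.
case: (a == s b) => /=; last by [].
case: (p == map s i) => /=; last by rewrite /cg_mul allpairs_nilr.
by rewrite /cg_mul /cg_gen /= mul1r.
Qed.

Lemma utensE k (p i : k.-tuple 'I_n) s :
  utens p i s = if p == tact s i then [:: (1, val p)] else [::].
Proof.
by rewrite /utens utens_seq ?size_tuple.
Qed.

Lemma coef_Tu k l (T : Lin n k l) j i s w :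
  cg_coef A (Tu T j i s) w = T (j, tact s i) * (memZ A (val (tact s i) ++ rev w))%:R.
Proof.
rewrite /Tu /cg_sum cg_coef_flatten big_map.
rewrite (bigD1_seq (tact s i)) ?mem_enum ?enum_uniq // big1 /= ?addr0.

  by rewrite cg_coef_scale utensE eqxx cg_coef_single.
by move=> p /negbTE hp; rewrite cg_coef_scale utensE hp cg_coef_nil mulr0.
Qed.

Lemma coef_uT k l (T : Lin n k l) j i s w :
  cg_coef A (uT T j i s) w = T (tact s^-1 j, i) * (memZ A (val j ++ rev w))%:R.
Proof.
rewrite /uT /cg_sum cg_coef_flatten big_map.
rewrite (bigD1_seq (tact s^-1 j)) ?mem_enum ?enum_uniq // big1 /= ?addr0.
  by rewrite cg_coef_scale utensE tactKV eqxx cg_coef_single.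
move=> q hq; rewrite cg_coef_scale utensE.
case: eqP => [ej|_]; last by rewrite cg_coef_nil mulr0.
by move: hq; rewrite ej tactK eqxx.
Qed.
End Coef.
Section MorSec.
Variable n : nat.
Variable H : {group {perm 'I_n}}.
Variable A : pred (word n).
Hypothesis nA : normal_subgroup A.

Definition Pgood k l (T : Lin n k l) : Prop :=
  (forall j i, ~~ memZ A (val i ++ rev (val j)) -> T (j, i) = 0) /\
  (forall s, s \in H -> forall j i, T (tact s j, tact s i) = T (j, i)).

Lemma Mor_good k l (T : Lin n k l) : Mor H A T <-> Pgood T.
Proof.
split.
  move=> M.
  have P1 : forall j i, ~~ memZ A (val i ++ rev (val j)) -> T (j, i) = 0.
    move=> j i hb; have := M j i 1%g (group1 H) (val j).
    rewrite coef_Tu coef_uT invg1 !tact1 (negbTE hb) memZ_self // mulr0 mulr1.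
    by move=> ->.
  split; first exact: P1.
  move=> s hs j i.
  have := M (tact s j) i s hs (val (tact s j)).
  rewrite coef_Tu coef_uT tactK memZ_self // mulr1.
  case h: (memZ A _); first by rewrite mulr1.
  by move=> <-; rewrite P1 ?h // mul0r.
case=> P1 P2 j i s hs w.
rewrite coef_Tu coef_uT.
have e : T (j, tact s i) = T (tact s^-1 j, i) by rewrite -{1}(tactKV s j) P2.
rewrite e.
case: (boolP (memZ A (val (tact s i) ++ rev (val j)))) => h.
  by rewrite (memZ_shift nA _ h).
by rewrite -e P1 // !mul0r.
Qed.
End MorSec.
Lemma sum_single (S : eqType) (r : seq S) (F : S -> Cplx) x0 :
  uniq r -> x0 \in r -> (forall x, x \in r -> x != x0 -> F x = 0) ->
  \sum_(x <- r) F x = F x0.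
Proof.
move=> ur hx0 hF; rewrite (bigD1_seq x0) // big_seq_cond big1 /= ?addr0 //.
by move=> x /andP[hx hne]; exact: hF.
Qed.

Lemma sum_zero (S : eqType) (r : seq S) (F : S -> Cplx) :
  (forall x, x \in r -> F x = 0) -> \sum_(x <- r) F x = 0.
Proof. by move=> hF; rewrite big_seq big1 // => x /hF. Qed.

Section Orb.
Variable n : nat.
Variable H : {group {perm 'I_n}}.
Variable A : pred (word n).
Hypothesis nA : normal_subgroup A.
Hypothesis hInv : H_invariant H A.
Variables k l : nat.
Local Notation P := (k.-tuple 'I_n * l.-tuple 'I_n)%type.

Lemma orbit_refl (p : P) : p \in orbitH H p.
Proof. by apply/imsetP; exists 1%g; rewrite ?group1 // !tact1; case: p. Qed.

Lemma orbit_eq (p q : P) : q \in orbitH H p -> orbitH H q = orbitH H p.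
Proof.
case/imsetP => s hs -> /=; apply/setP => z; apply/imsetP/imsetP.
  by case=> t ht ->; exists (s * t)%g; rewrite ?groupM //= !tactM.
case=> t ht ->; exists (s^-1 * t)%g; rewrite ?groupM ?groupV //=.
by rewrite -!tactM mulKVg.
Qed.

Lemma That0 (p : P) j i : (That H p (j, i) == 0) = ((i, j) \notin orbitH H p).
Proof.
rewrite ffunE pnatr_eq0 cards_eq0; apply/idP/idP.
  move/eqP=> h; apply/imsetP => [[s hs [e1 e2]]].
  have : s \in [set s in H | (tact s p.1 == i) && (tact s p.2 == j)].
    by rewrite inE hs e1 e2 !eqxx.
  by rewrite h inE.
move=> hn; apply/eqP/setP => s; rewrite !inE; apply/negP.
case/andP=> hs /andP[/eqP e1 /eqP e2]; move/negP: hn; apply.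
by apply/imsetP; exists s; rewrite ?e1 ?e2.
Qed.

Lemma That_self (p : P) : That H p (p.2, p.1) != 0.
Proof. by rewrite That0 negbK; case: p => a b; apply: orbit_refl. Qed.

Lemma That_inv (p : P) t j i : t \in H -> That H p (tact t j, tact t i) = That H p (j, i).
Proof.
move=> ht; rewrite !ffunE; congr (_%:R).
rewrite -[RHS](card_imset _ (mulIg t)); apply: eq_card => s.
rewrite inE /=; apply/idP/imsetP.
  case/andP=> hs /andP[/eqP e1 /eqP e2]; exists (s * t^-1)%g.
    by rewrite inE groupM ?groupV // !tactM e1 e2 !tactK !eqxx.
  by rewrite mulgKV.
case=> s' ; rewrite inE => /andP[hs' /andP[/eqP e1 /eqP e2]] ->.
by rewrite groupM // !tactM e1 e2 !eqxx.
Qed.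

Lemma mem_W (p : P) : orbitH H p \in W H k l.
Proof. by apply/imsetP; exists p; rewrite ?inE. Qed.

Lemma W_pick X : X \in W H k l -> exists q, [pick p in X] = Some q /\ X = orbitH H q.
Proof.
case/imsetP => p _ ->; case: pickP => [q hq|h]; last by have := h p; rewrite orbit_refl.
by exists q; split; rewrite // (orbit_eq hq).
Qed.

Lemma memZ_orbit (p q : P) : q \in orbitH H p ->
  memZ A (val q.1 ++ rev (val q.2)) = memZ A (val p.1 ++ rev (val p.2)).
Proof.
case/imsetP => s hs -> /=; rewrite -(hInv hs (val p.1 ++ rev (val p.2))).
by rewrite /Defs.act map_cat map_rev.
Qed.

Lemma ThatW_zero X j i : X \in W H k l -> X != orbitH H (i, j) -> ThatW H X (j, i) = 0.
Proof.
case/W_pick => q [hp e] hne; rewrite /ThatW hp; apply/eqP; rewrite That0.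
by apply: contra hne => h; rewrite e (orbit_eq h).
Qed.

Definition gens := [seq ThatW H X | X <- enum (W H k l) & classInA A X].

Lemma gen_good X : X \in W H k l -> classInA A X -> Pgood H A (ThatW H X).
Proof.
case/W_pick => q [hp e]; rewrite /classInA /ThatW hp => hc; split.
  move=> j i hb; apply/eqP; rewrite That0; apply/negP => h.
  by move: hb; rewrite (memZ_orbit h) hc.
by move=> s hs j i; rewrite That_inv.
Qed.

Lemma span_good (T : Lin n k l) : T \in <<gens>>%VS -> Pgood H A T.
Proof.
move=> hT; have -> := @coord_span _ _ _ (in_tuple gens) _ hT.
have hg : forall m : 'I_(size gens), Pgood H A (gens`_m).
  move=> m; case/mapP: (mem_nth 0 (ltn_ord m)) => X.
  by rewrite mem_filter mem_enum => /andP[hc hw] ->; apply: gen_good.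
split.
  move=> j i hb; rewrite sum_ffunE big1 // => m _; rewrite ffunE /=.
  by rewrite ((hg m).1 j i hb) scaler0.
move=> s hs j i; rewrite !sum_ffunE; apply: eq_bigr => m _; rewrite !ffunE /=.
by rewrite ((hg m).2 s hs).
Qed.

Definition cT (T : Lin n k l) (X : {set P}) : Cplx :=
  if [pick p in X] is Some p then T (p.2, p.1) / That H p (p.2, p.1) else 0.

Lemma good_span (T : Lin n k l) : Pgood H A T -> T \in <<gens>>%VS.
Proof.
case=> P1 P2.
have -> : T = \sum_(X <- enum (W H k l) | classInA A X) cT T X *: ThatW H X.
  apply/ffunP => [[j i]]; rewrite sum_ffunE -big_filter.
  rewrite (eq_bigr (fun X => cT T X * ThatW H X (j, i))); last by move=> X _; rewrite ffunE.
  have [q [hq e]] := W_pick (mem_W (i, j)).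
  have hij : (i, j) \in orbitH H q by rewrite -e orbit_refl.
  have hz : forall X, X \in [seq X <- enum (W H k l) | classInA A X] ->
      X != orbitH H (i, j) -> cT T X * ThatW H X (j, i) = 0.
    move=> X; rewrite mem_filter mem_enum => /andP[_ hX] hne.
    by rewrite ThatW_zero // mulr0.
  case hc: (classInA A (orbitH H (i, j))).
    rewrite (sum_single _ _ hz); first last.
    - by rewrite mem_filter hc mem_enum mem_W.
    - by rewrite filter_uniq // enum_uniq.
    rewrite /cT /ThatW hq.
    case/imsetP: hij => s hs [ei ej].
    rewrite ei ej That_inv // P2 //.
    by rewrite divfK ?That_self.
  rewrite sum_zero; last first.
    move=> X hX; apply: hz => //; apply/negP => /eqP hX0.
    by move: hX; rewrite mem_filter hX0 hc.
  apply: P1; move: hc; rewrite /classInA hq -(memZ_orbit hij) /=.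
  by move=> ->.
rewrite big_seq_cond; apply: memv_suml => X /andP[hX hc].
apply: memvZ; apply: memv_span; apply/mapP; exists X => //.
by rewrite mem_filter hc hX.
Qed.

Lemma free_all : free [seq ThatW H X | X <- enum (W H k l)].
Proof.
apply/(@freeP _ _ _ (in_tuple [seq ThatW H X | X <- enum (W H k l)])) => c hc m.
set s := enum (W H k l).
have hm : (m < size s)%N by rewrite -(size_map (@ThatW n H k l)); exact: ltn_ord.
set X := nth set0 s m.
have hX : X \in W H k l by rewrite -mem_enum mem_nth.
have [q [hq e]] := W_pick hX.
have := congr1 (fun f : Lin n k l => f (q.2, q.1)) hc.
cbv beta; rewrite sum_ffunE ffunE (bigD1 m) // big1 /= ?addr0.
  rewrite ffunE /= (nth_map set0) // -/X /ThatW hq.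
  by move=> h; apply: (mulIf (That_self q)); rewrite mul0r; exact: h.
move=> m' hm'.
have hm2 : (m' < size s)%N by rewrite -(size_map (@ThatW n H k l)); exact: ltn_ord.
rewrite ffunE /= (nth_map set0) //.
have hX' : nth set0 s m' \in W H k l by rewrite -mem_enum mem_nth.
have hne : nth set0 s m' != orbitH H (q.1, q.2).
  rewrite -surjective_pairing -e /X; apply: contra hm' => /eqP hh.
  apply/eqP/val_inj => /=; apply/eqP.
  by rewrite -(nth_uniq set0 hm2 hm (enum_uniq _)) hh.
by rewrite (ThatW_zero hX' hne) scaler0.
Qed.
End Orb.

Theorem theorem5p11 (n : nat) (H : {group {perm 'I_n}}) (A : pred (word n)) :
  normal_subgroup A -> H_invariant H A ->
  forall k l : nat,
    (forall T : Lin n k l,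
        Mor H A T <->
        T \in <<[seq ThatW H X | X <- enum (W H k l) & classInA A X]>>%VS)
    /\ free [seq ThatW H X | X <- enum (W H k l)].
Proof.
move=> nA hInv k l; split; last exact: free_all.
move=> T; split.
  by move=> /(@Mor_good n H A nA k l T) hT; apply: good_span.
by move=> hT; apply/(@Mor_good n H A nA k l T); apply: span_good.
Qed.
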